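(* Let $a=\{a_1,\dots,a_m\}$ be a set of positive integers and $n\ge 0$. Then there exist a polynomial $P(k)\in\mathbb{Q}[k]$ of degree $n$ and an integer $N$ such that for every integer $k\ge N$ the number of $n$-element independent sets of $F(a,k)$ equals $P(k)$.
   Context: For a set $a=\{a_1,\dots,a_m\}$ of positive integers and a positive integer $k$, $F(a,k)$ is the simple graph with vertex set $\mathbb{Z}/k\mathbb{Z}$ in which distinct vertices $i,j$ are adjacent if and only if $i-j\equiv a_r\pmod k$ or $j-i\equiv a_r\pmod k$ for some $1\le r\le m$. An independent set is a set of vertices no two of which are adjacent. *)

(* Defs.v *)
From HB Require Import structures.
From mathcomp Require Import all_boot all_order all_algebra.
Set Implicit Arguments. Unset Strict Implicit. Unset Printing Implicit Defensive.

(* Vertices of F(a,k) are the residues Z/kZ, represented by 'I_k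
   (residue i <-> i in {0,...,k-1}).  For i j : 'I_k, the residue of
   i - j mod k is (i + k - j) %% k, and "i - j = a_r (mod k)" means
   (i + (k - j)) = a_r %[mod k]. *)
Definition Fadj (a : seq nat) (k : nat) (i j : 'I_k) : bool :=
  (i != j) &&
  has (fun ar => ((i + (k - j)) %% k == ar %% k) ||
                 ((j + (k - i)) %% k == ar %% k)) a.

Definition Findep (a : seq nat) (k : nat) (S : {set 'I_k}) : bool :=
  [forall i in S, forall j in S, ~~ Fadj a i j].

Definition num_indep (a : seq nat) (k n : nat) : nat :=
  #|[set S : {set 'I_k} | (#|S| == n) && Findep a S]|.

(* Main.v *)
Require Import Defs.
From HB Require Import structures.
From mathcomp Require Import all_boot all_order all_algebra.
From mathcomp Require Import zify ring.
Set Implicit Arguments. Unset Strict Implicit. Unset Printing Implicit Defensive.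
Import Order.TTheory GRing.Theory Num.Theory.

Local Open Scope ring_scope.

Section Comb.
Local Open Scope nat_scope.

Definition condX (a : seq nat) (l m : nat) (F G : pred nat) (j : nat)
  (X : {set 'I_l}) : bool :=
  (#|X| == m) &&
  [forall x : 'I_l, (x \in X) ==> (~~ F x && ~~ G (l.-1 - x))] &&
  [forall x : 'I_l, (x \in X) ==> [forall y : 'I_l, (y \in X) ==>
      ((x < y) ==> ((y - x \notin a) && (x + j + l - y \notin a)))]].

Definition Cset a l m F G j := #|[set X : {set 'I_l} | condX a m F G j X]|.

Definition phi0 l (X : {set 'I_l}) : {set 'I_l.+1} := [set lift ord0 x | x in X].
Definition phi1 l (X : {set 'I_l}) : {set 'I_l.+1} := ord0 |: phi0 X.
Definition psi l (S : {set 'I_l.+1}) : {set 'I_l} := [set x | lift ord0 x \in S].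

Lemma card_bij (T1 T2 : finType) (A : {set T1}) (B : {set T2}) (f : T1 -> T2) (g : T2 -> T1) :
  (forall x, x \in A -> f x \in B /\ g (f x) = x) ->
  (forall y, y \in B -> g y \in A /\ f (g y) = y) -> #|A| = #|B|.
Proof.
move=> hA hB.
have -> : B = [set f x | x in A].
  apply/setP => y; apply/idP/imsetP.
    by move=> yB; have [gA fg] := hB y yB; exists (g y).
  by case=> x xA ->; have [] := hA x xA.
rewrite card_in_imset // => x1 x2 h1 h2 e.
by have [_ <-] := hA x1 h1; have [_ <-] := hA x2 h2; rewrite e.
Qed.

Lemma ord0_phi0 l (X : {set 'I_l}) : ord0 \notin phi0 X.
Proof. by apply/imsetP => -[x _ /eqP]; rewrite (negbTE (neq_lift _ _)). Qed.

Lemma lift_phi0 l (X : {set 'I_l}) x : (lift ord0 x \in phi0 X) = (x \in X).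
Proof. by rewrite mem_imset //; exact: lift_inj. Qed.

Lemma psi_phi0 l (X : {set 'I_l}) : psi (phi0 X) = X.
Proof. by apply/setP => x; rewrite inE lift_phi0. Qed.

Lemma psi_phi1 l (X : {set 'I_l}) : psi (phi1 X) = X.
Proof. by apply/setP => x; rewrite !inE lift_phi0 eq_sym (negbTE (neq_lift _ _)). Qed.

Lemma phi0_psi l (S : {set 'I_l.+1}) : ord0 \notin S -> phi0 (psi S) = S.
Proof.
move=> h; apply/setP => y; case: (unliftP ord0 y) => [x ->|->].
  by rewrite lift_phi0 inE.
by rewrite (negbTE h) (negbTE (ord0_phi0 _)).
Qed.

Lemma phi1_psi l (S : {set 'I_l.+1}) : ord0 \in S -> phi1 (psi S) = S.
Proof.
move=> h; apply/setP => y; rewrite /phi1 in_setU1; case: (unliftP ord0 y) => [x ->|->].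
  by rewrite lift_phi0 inE eq_sym (negbTE (neq_lift _ _)).
by rewrite eqxx h.
Qed.

Lemma forall_phi0 l (X : {set 'I_l}) (P : 'I_l.+1 -> bool) :
  [forall y, (y \in phi0 X) ==> P y] = [forall x, (x \in X) ==> P (lift ord0 x)].
Proof.
apply/forallP/forallP => H x.
  by apply/implyP => xX; have := H (lift ord0 x); rewrite lift_phi0 xX.
apply/implyP => /imsetP [y yX ->]; exact: (implyP (H y) yX).
Qed.

Lemma forall_phi1 l (X : {set 'I_l}) (P : 'I_l.+1 -> bool) :
  [forall y, (y \in phi1 X) ==> P y] = P ord0 && [forall x, (x \in X) ==> P (lift ord0 x)].
Proof.
rewrite -forall_phi0; apply/forallP/andP.
  move=> H; split; first by apply: (implyP (H ord0)); rewrite /phi1 setU11.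
  by apply/forallP => y; apply/implyP => yX; apply: (implyP (H y)); rewrite /phi1 setU1r.
case=> H0 /forallP H y; apply/implyP; rewrite /phi1 in_setU1 => /orP [/eqP -> //|].
exact: (implyP (H y)).
Qed.


Lemma cond_phi0 a l m F G j (X : {set 'I_l}) :
  condX a m F G j (phi0 X) = condX a m (fun p => F p.+1) G j.+1 X.
Proof.
rewrite /condX card_imset; last exact: lift_inj.
rewrite !forall_phi0; congr (_ && _ && _).
  apply: eq_forallb => x; rewrite lift0 /=.
  by have -> : l - x.+1 = l.-1 - x by lia.
apply: eq_forallb => x; rewrite forall_phi0; congr (_ ==> _).
apply: eq_forallb => y; rewrite !lift0 ltnS subSS.
by have -> : x.+1 + j + l.+1 - y.+1 = x + j.+1 + l - y by lia.
Qed.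


Lemma forall_andb (T : finType) (p q r : pred T) :
  [forall x, p x ==> (q x && r x)] = [forall x, p x ==> q x] && [forall x, p x ==> r x].
Proof.
apply/forallP/andP.
  by move=> H; split; apply/forallP => x; apply/implyP => px; have /andP[] := implyP (H x) px.
by case=> /forallP H1 /forallP H2 x; apply/implyP => px; rewrite (implyP (H1 x) px) (implyP (H2 x) px).
Qed.

Lemma cond_phi1 a l m F G j (X : {set 'I_l}) :
  condX a m.+1 F G j (phi1 X) = [&& ~~ F 0, ~~ G l &
    condX a m (fun p => F p.+1 || (p.+1 \in a)) (fun e => G e || (j + e.+1 \in a)) j.+1 X].
Proof.
have cX : #|phi1 X| = #|X|.+1.
  by rewrite /phi1 cardsU1 (ord0_phi0 X) card_imset //; exact: lift_inj.
have E : [forall x, (x \in phi1 X) ==> [forall y, (y \in phi1 X) ==>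
      ((x < y) ==> ((y - x \notin a) && (x + j + l.+1 - y \notin a)))]] =
   [forall y, (y \in X) ==> ((y.+1 \notin a) && (j + (l.-1 - y).+1 \notin a))] &&
   [forall x, (x \in X) ==> [forall y, (y \in X) ==>
      ((x < y) ==> ((y - x \notin a) && (x + j.+1 + l - y \notin a)))]].
  rewrite forall_phi1; congr (_ && _).
    rewrite forall_phi1 /=; apply: eq_forallb => y; rewrite /bump leq0n add1n subn0 add0n.
    by have -> : j + l.+1 - y.+1 = j + (l.-1 - y).+1 by have := ltn_ord y; lia.
  apply: eq_forallb => x; rewrite forall_phi1 lift0 /=; congr (_ ==> _).
  apply: eq_forallb => y; rewrite /bump leq0n add1n ltnS subSS.
  by have -> : x.+1 + j + l.+1 - y.+1 = x + j.+1 + l - y by lia.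
rewrite /condX cX eqSS E forall_phi1 /= subn0.
have E2 : [forall x, (x \in X) ==> (~~ (F x.+1 || (x.+1 \in a)) &&
          ~~ (G (l.-1 - x) || (j + (l.-1 - x).+1 \in a)))] =
  [forall x, (x \in X) ==> (~~ F (bump 0 x) && ~~ G (l - bump 0 x))] &&
  [forall y, (y \in X) ==> ((y.+1 \notin a) && (j + (l.-1 - y).+1 \notin a))].
  rewrite -forall_andb; apply: eq_forallb => x; rewrite /bump leq0n add1n.
  have -> : l - x.+1 = l.-1 - x by lia.
  by rewrite !negb_or; case: (F _); case: (_ \in a); case: (G _); case: (_ \in a).
rewrite E2.
rewrite !andbA.
by case: (#|X| == m); case: (F 0); case: (G l).
Qed.


Lemma Cset0 a l F G j : Cset a l 0 F G j = 1.
Proof.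
rewrite /Cset (_ : [set X : {set 'I_l} | _] = [set set0]) ?cards1 //.
apply/setP => X; rewrite !inE; apply/idP/eqP.
  by case/andP => /andP [/eqP /cards0_eq -> _] _.
move=> ->; rewrite /condX cards0 eqxx /=.
by apply/andP; split; apply/forallP => x; rewrite inE.
Qed.

Lemma Cset_rec a l m F G j :
  Cset a l.+1 m.+1 F G j = Cset a l m.+1 (fun p => F p.+1) G j.+1 +
   (~~ F 0 && ~~ G l) * Cset a l m (fun p => F p.+1 || (p.+1 \in a))
                                   (fun e => G e || (j + e.+1 \in a)) j.+1.
Proof.
rewrite /Cset -(cardsID [set S : {set 'I_l.+1} | ord0 \in S]) addnC.
congr (_ + _).
  apply: (@card_bij _ _ _ _ (@psi l) (@phi0 l)).
    move=> S; rewrite !inE => /andP [h0 hc]; rewrite phi0_psi //; split => //.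
    by rewrite -cond_phi0 phi0_psi.
  move=> X; rewrite !inE => hc; rewrite psi_phi0 cond_phi0 hc ord0_phi0; split => //.
case: (~~ F 0 && ~~ G l) / idP => hb; last first.
  rewrite mul0n; apply/eqP; rewrite cards_eq0; apply/eqP/setP => S.
  rewrite !inE; apply/negP => /andP [hc h0].
  by move: hc; rewrite -(phi1_psi h0) cond_phi1 => /andP [h1 /andP [h2 _]]; apply: hb; rewrite h1 h2.
rewrite mul1n.
apply: (@card_bij _ _ _ _ (@psi l) (@phi1 l)).
  move=> S; rewrite !inE => /andP [hc h0]; rewrite phi1_psi //; split => //.
  by move: hc; rewrite -{1}(phi1_psi h0) cond_phi1 => /and3P [].
move=> X; rewrite !inE => hc; rewrite psi_phi1 cond_phi1; case/andP: hb => -> ->; rewrite hc.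
by rewrite eqxx.
Qed.

Lemma Cset_ext a l m F F' G j j' : F =1 F' ->
  (forall z, z \in a -> z <= j) -> (forall z, z \in a -> z <= j') ->
  Cset a l m F G j = Cset a l m F' G j'.
Proof.
move=> hF hj hj'; rewrite /Cset; apply: eq_card => X; rewrite !inE /condX.
congr (_ && _ && _).
  by apply: eq_forallb => x; rewrite hF.
apply: eq_forallb => x; congr (_ ==> _); apply: eq_forallb => y; congr (_ ==> _).
have yl := ltn_ord y.
have -> : x + j + l - y \notin a by apply/negP => /hj; lia.
have -> : x + j' + l - y \notin a by apply/negP => /hj'; lia.
by [].
Qed.


Lemma hasE (a : seq nat) k u v : (forall z, z \in a -> z < k) ->
  has (fun ar => (u == ar %% k) || (v == ar %% k)) a = (u \in a) || (v \in a).
Proof.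
move=> hk; apply/hasP/orP.
  case=> ar arin; rewrite modn_small ?hk // => /orP [/eqP e|/eqP e].
    by left; rewrite e.
  by right; rewrite e.
case=> h; [exists u | exists v] => //; rewrite modn_small ?hk // eqxx ?orbT //.
Qed.

Lemma Fadj_lt a k (x y : 'I_k) : (forall z, z \in a -> z < k) -> x < y ->
  Fadj a x y = ((y - x \in a) || (x + k - y \in a)) /\ Fadj a y x = ((y - x \in a) || (x + k - y \in a)).
Proof.
move=> hk lt.
have yk := ltn_ord y.
have e1 : (x + (k - y)) %% k = x + k - y.
  rewrite modn_small; lia.
have e2 : (y + (k - x)) %% k = y - x.
  have -> : y + (k - x) = (y - x) + k by lia.
  rewrite modnDr modn_small //; lia.
have nxy : (x != y) by rewrite neq_ltn lt.
have nyx : (y != x) by rewrite neq_ltn lt orbT.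
rewrite /Fadj nxy nyx e1 e2 !andTb !hasE //; split => //.
by rewrite orbC.
Qed.

Lemma bridge a k n : (forall z, z \in a -> z < k) ->
  num_indep a k n = Cset a k n pred0 pred0 0.
Proof.
move=> hk; rewrite /num_indep /Cset; apply: eq_card => S; rewrite !inE /condX /Findep.
have -> : [forall x : 'I_k, (x \in S) ==> (~~ pred0 x && ~~ pred0 (k.-1 - x))] = true.
  by apply/forallP => x; apply/implyP.
rewrite andbT; congr (_ && _).
apply/forallP/forallP => H x; apply/implyP => xS.
  have /forallP Hx := implyP (H x) xS; apply/forallP => y; apply/implyP => yS.
  apply/implyP => lt; have := implyP (Hx y) yS.
  by have [-> _] := Fadj_lt hk lt; rewrite addn0 negb_or.
apply/forallP => y; apply/implyP => yS.
case: (ltngtP x y) => [lt|lt|e].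
- have := implyP (implyP (forallP (implyP (H x) xS) y) yS) lt.
  by have [-> _] := Fadj_lt hk lt; rewrite addn0 negb_or.
- have := implyP (implyP (forallP (implyP (H y) yS) x) xS) lt.
  by have [_ ->] := Fadj_lt hk lt; rewrite addn0 negb_or.
- by rewrite /Fadj (ord_inj e) eqxx.
Qed.

Lemma le_sumn (a : seq nat) z : z \in a -> z <= sumn a.
Proof.
elim: a => // b s IH; rewrite inE => /orP [/eqP ->|h] /=; first exact: leq_addr.
exact: leq_trans (IH h) (leq_addl _ _).
Qed.

End Comb.
Lemma antidiff d : forall H : {poly rat}, (size H <= d)%N ->
  exists S : {poly rat}, (forall x, S.[x + 1] - S.[x] = H.[x]) /\
    (size S <= (size H).+1)%N /\
    (H != 0 -> size S = (size H).+1 /\ lead_coef S = lead_coef H / (size H)%:R).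
Proof.
elim: d => [|d IH] H sH.
  have H0: H = 0 by apply/eqP; rewrite -size_poly_eq0 -leqn0.
  exists 0; rewrite H0 size_poly0 eqxx; split=> // x; by rewrite !horner0 subrr.
case: (ltnP (size H) d.+1) => [lt|ge]; first by apply IH.
have sHe : size H = d.+1 by apply/eqP; rewrite eqn_leq sH ge.
set c := lead_coef H.
have c0 : c != 0 by rewrite lead_coef_eq0 -size_poly_eq0 sHe.
have k0 : c / d.+1%:R != 0 by rewrite mulf_neq0 // invr_eq0 pnatr_eq0.
set T := (c / d.+1%:R) *: 'X^(d.+1).
set D := (c / d.+1%:R) *: (('X + 1)^+d.+1 - 'X^(d.+1)).
have HD : forall x, D.[x] = T.[x+1] - T.[x].
  by move=> x; rewrite /D /T !hornerE mulrBr.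
have eD : D = (c / d.+1%:R) *: (\sum_(i < d) ('X^i *+ 'C(d.+1, i)))%R + c *: 'X^d.
  rewrite /D exprD1n big_ord_recr /= binn mulr1n addrK big_ord_recr /= binSn.
  rewrite scalerDr; congr (_ + _).
  rewrite -scaler_nat scalerA mulrAC -mulrA divff ?mulr1 // pnatr_eq0 //.
have sR : (size (H - D)%R <= d)%N.
  apply/leq_sizeP => j hj.
  rewrite eD coefB coefD coefZ coef_sum coefZ coefXn big1 ?mulr0 ?add0r; last first.
    move=> i _; rewrite coefMn coefXn.
    by rewrite (_ : (j == i) = false) ?mul0rn // ; apply/negbTE; rewrite neq_ltn (leq_trans (ltn_ord i) hj) orbT.
  case: (ltngtP j d) hj => //.
    move=> ltdj _; have /leq_sizeP hz := leqnn (size H).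
    by rewrite hz ?mulr0 ?subr0 // sHe.
  by move=> -> _; rewrite mulr1 /c lead_coefE sHe subrr.
have [S' [eS' [sS' _]]] := IH _ sR.
have sT : size T = d.+2 by rewrite /T size_scale // size_polyXn.
have ltS' : (size S' < size T)%N by rewrite sT ltnS (leq_trans sS').
exists (T + S'); split.
  move=> x; rewrite !hornerD opprD addrACA eS' -HD hornerD hornerN.
  by rewrite addrC subrK.
rewrite size_polyDl // sT sHe; split => // _; split => //.
by rewrite lead_coefDl // /T lead_coefZ lead_coefXn mulr1.
Qed.

Definition EP (m : nat) (f : nat -> nat) := exists (P : {poly rat}) (N : nat),
  size P = m.+1 /\ 0 < lead_coef P /\ forall l, (N <= l)%N -> (f l)%:R = P.[l%:R].

Lemma EP_shift m f f1 h (c : nat) N0 :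
  (forall l, (N0 <= l)%N -> f l.+1 = (f1 l + c * h l)%N) ->
  EP m.+1 f1 -> EP m h -> EP m.+1 f.
Proof.
move=> hf [P1 [N1 [s1 [l1 e1]]]] [P2 [N2 [s2 [l2 e2]]]].
set Q := P1 + c%:R *: P2.
have sQ' : (size (c%:R *: P2) < size P1)%N.
  by rewrite (leq_ltn_trans (size_scale_leq _ _)) // s1 s2.
have sQ : size Q = m.+2 by rewrite size_polyDl // s1.
have lQ : lead_coef Q = lead_coef P1 by rewrite lead_coefDl.
exists (Q \Po ('X - 1%:P)), (maxn N0 (maxn N1 N2)).+1.
split; first by rewrite size_comp_poly2 // size_XsubC.
split; first by rewrite lead_coef_comp ?size_XsubC // lead_coefXsubC expr1n mulr1 lQ.
case=> // l hl.
have h0 : (N0 <= l)%N by lia.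
have h1 : (N1 <= l)%N by lia.
have h2 : (N2 <= l)%N by lia.
rewrite hf // natrD natrM e1 // e2 // horner_comp hornerXsubC hornerD hornerZ.
by rewrite -natr1 addrK.
Qed.

Lemma EP_sum m f h N0 :
  (forall l, (N0 <= l)%N -> f l.+1 = (f l + h l)%N) -> EP m h -> EP m.+1 f.
Proof.
move=> hf [H [N2 [sH [lH eH]]]].
have [S [eS [_ hS]]] := @antidiff _ H (leqnn (size H)).
have H0 : H != 0 by rewrite -size_poly_eq0 sH.
have [sS lS] := hS H0.
set N := maxn N0 N2.
set k := (f N)%:R - S.[N%:R].
have key : forall t, (f (N + t)%N)%:R = S.[(N+t)%N%:R] + k.
  elim=> [|t IHt]; first by rewrite addn0 /k addrC subrK.
  rewrite addnS hf; last by rewrite /N; lia.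
  rewrite natrD IHt eH; last by rewrite /N; lia.
  rewrite -eS -[(N+t).+1]addn1 (natrD _ (N+t) 1).
  set x := ((N + t)%N)%:R; set u := S.[x + 1]; set v := S.[x].
  ring.
exists (S + k%:P), N.
have sk : (size k%:P < size S)%N by rewrite (leq_ltn_trans (size_polyC_leq1 _)) // sS sH.
split; first by rewrite size_polyDl // sS sH.
split; first by rewrite lead_coefDl // lS divr_gt0 // ltr0n sH.
move=> l hl; rewrite -(subnKC hl) key hornerD hornerC //.
Qed.

Lemma main_EP a M (hM : forall z, z \in a -> (z < M)%N) m :
  forall (F G : pred nat) (j bF bG : nat), (forall p, F p -> (p < bF)%N) -> (forall p, G p -> (p < bG)%N) ->
  EP m (fun l => Cset a l m F G j).
Proof.
elim: m => [|m IHm] F G j bF bG hF hG.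
  exists 1, 0%N; rewrite size_poly1 lead_coef1 ltr01; split=>//; split=>// l _.
  by rewrite Cset0 hornerC.
have hh : forall (F G : pred nat) (j bF bG : nat), (forall p, F p -> (p < bF)%N) -> (forall p, G p -> (p < bG)%N) ->
    EP m (fun l => Cset a l m (fun p => F p.+1 || (p.+1 \in a))
                              (fun e => G e || (j + e.+1 \in a)%N) j.+1).
  move=> F' G' j' bF' bG' hF' hG'; apply: (IHm _ _ _ (bF' + M)%N (bG' + M)%N).
    by move=> p /orP [/hF'|/hM]; lia.
  by move=> p /orP [/hG'|/hM]; lia.
have base : forall (F G : pred nat) (j bG : nat), (M <= j)%N -> (forall p, ~~ F p) ->
    (forall p, G p -> (p < bG)%N) -> EP m.+1 (fun l => Cset a l m.+1 F G j).
  move=> F' G' j' bG' hj hF' hG'.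
  apply: (@EP_sum _ _ _ bG' _ (hh F' G' j' 0%N bG' _ hG')); last first.
    by move=> p; rewrite (negbTE (hF' p)).
  move=> l hl; rewrite Cset_rec (negbTE (hF' 0%N)).
  have -> : G' l = false by apply/negP => /hG'; lia.
  rewrite mul1n; congr (_ + _)%N; apply: Cset_ext.
  - by move=> p; rewrite (negbTE (hF' _)) (negbTE (hF' _)).
  - by move=> z /hM; lia.
  - by move=> z /hM; lia.
suff: forall (t : nat) (F G : pred nat) (j bF bG : nat), (M - j + bF <= t)%N -> (forall p, F p -> (p < bF)%N) ->
    (forall p, G p -> (p < bG)%N) -> EP m.+1 (fun l => Cset a l m.+1 F G j).
  by move/(_ _ F G j bF bG (leqnn _) hF hG).
elim=> [|t IHt] F' G' j' bF' bG' ht hF' hG'.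
  apply: (base _ _ _ bG') => //; first lia.
  by move=> p; apply/negP => /hF'; lia.
case: (posnP (M - j' + bF')%N) => [z|pos].
  apply: (base _ _ _ bG') => //; first lia.
  by move=> p; apply/negP => /hF'; lia.
apply: (@EP_shift _ _ (fun l => Cset a l m.+1 (fun p => F' p.+1) G' j'.+1) _ (~~ F' 0%N) bG').
- move=> l hl; rewrite Cset_rec.
  have -> : G' l = false by apply/negP => /hG'; lia.
  by rewrite andbT.
- apply: (IHt _ _ _ bF'.-1 bG') => //; first lia.
  by move=> p /hF'; lia.
- exact: (hh F' G' j' bF' bG').
Qed.

Theorem lemma3p3 (a : seq nat) (n : nat) :
  uniq a -> (forall x, x \in a -> (0 < x)%N) ->
  exists (P : {poly rat}) (N : nat),
    size P = n.+1 /\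
    forall k : nat, (N <= k)%N -> (num_indep a k n)%:R = P.[k%:R].
Proof.
move=> _ _.
have hM : forall z, z \in a -> (z < (sumn a).+1)%N by move=> z /le_sumn.
have [P [N [sP [_ eP]]]] := @main_EP a _ hM n pred0 pred0 0%N 0%N 0%N (fun _ h => h) (fun _ h => h).
exists P, (maxn N (sumn a).+1); split => // k hk.
rewrite bridge; last by move=> z /hM; lia.
apply: eP; lia.
Qed.
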